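(* The inquisitive disjunction $\vee$ is strongly undefinable in propositional dependence logic $\mathcal D$. Concretely: for every context $\varphi(a,b)$ of $\mathcal D$ and every pair of distinct propositional letters $p,q$ not occurring in $\varphi(a,b)$, letting $M_{pq}$ be the model with worlds $w_1,w_2,w_3$ in which $p$ is true exactly at $w_1,w_2$, $q$ is true exactly at $w_2,w_3$, and all other letters are false everywhere, we have $\varphi(=\!(p),=\!(q))\not\equiv_{M_{pq}}=\!(p)\vee=\!(q)$; in particular $\varphi(=\!(p),=\!(q))\not\equiv=\!(p)\vee=\!(q)$.
   Context: Formulas of $\mathcal D$: $\varphi::= p\mid\neg p\mid\bot\mid=\!(p_1,\dots,p_n;q)\mid\varphi\land\varphi\mid\varphi\otimes\varphi$ with $p,q,p_i$ propositional letters ($n\ge0$; for $n=0$ written $=\!(q)$). A context $\varphi(a,b)$ is a $\mathcal D$ formula in which the letters $a,b$ do not occur negated nor inside a dependence atom; $\varphi(\psi,\chi)$ replaces $a$ by $\psi$ and $b$ by $\chi$. A model is $M=(W,V)$, $V(w)$ the set of letters true at $w$. Support at $s\subseteq W$: $s\models p$ iff $p$ true at all $w\in s$; $s\models\neg p$ iff $p$ false at all $w\in s$; $s\models\bot$ iff $s=\emptyset$; $s\models\psi\land\chi$ iff both; $s\models\psi\otimes\chi$ iff $s=t_1\cup t_2$ with $t_1\models\psi$, $t_2\models\chi$; $s\models=\!(p_1,\dots,p_n;q)$ iff any two worlds of $s$ agreeing on all $p_i$ agree on $q$; $s\models\psi\vee\chi$ iff $s\models\psi$ or $s\models\chi$ (inquisitive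 disjunction, not in $\mathcal D$). $\psi\equiv_M\chi$: same supporting states in $M$; $\psi\equiv\chi$: $\psi\equiv_M\chi$ for all $M$. Strong undefinability of a binary connective $\circ$ means: there are formulas $\psi,\chi$ and a model $M$ such that for every template (here: context) $\varphi(a,b)$, $\varphi(\psi',\chi')\not\equiv_{M'}\psi'\circ\chi'$, where $\psi',\chi'$ differ from $\psi,\chi$ only by a renaming of atoms and $M'$ is isomorphic to $M$. *)

(* Defs.v *)
From Stdlib Require Import List Arith Bool.
Import ListNotations.

Definition letter := nat.

Inductive form : Type :=
| Atom   : letter -> form
| NAtom  : letter -> form
| Bot    : form
| Dep    : list letter -> letter -> form
| And    : form -> form -> form
| Tensor : form -> form -> form.

Definition Const (q : letter) : form := Dep [] q.

Record model := Model { world : Type; val : world -> letter -> bool }.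

Definition state (M : model) := world M -> Prop.

Fixpoint supp (M : model) (s : state M) (f : form) : Prop :=
  match f with
  | Atom p => forall w, s w -> val M w p = true
  | NAtom p => forall w, s w -> val M w p = false
  | Bot => forall w, ~ s w
  | Dep ps q => forall w w', s w -> s w' ->
        (forall r, In r ps -> val M w r = val M w' r) -> val M w q = val M w' q
  | And f g => supp M s f /\ supp M s g
  | Tensor f g => exists t1 t2 : state M,
        (forall w, s w <-> (t1 w \/ t2 w)) /\ supp M t1 f /\ supp M t2 g
  end.

(* support of the inquisitive disjunction f \vee g (not a formula of D) *)
Definition supp_ivee (M : model) (s : state M) (f g : form) : Prop :=
  supp M s f \/ supp M s g.

Definition equiv_ivee_in (M : model) (f g h : form) : Prop :=
  forall s : state M, supp M s f <-> supp_ivee M s g h.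

Definition equiv_ivee (f g h : form) : Prop :=
  forall M : model, equiv_ivee_in M f g h.

Fixpoint occurs (r : letter) (f : form) : Prop :=
  match f with
  | Atom p => p = r
  | NAtom p => p = r
  | Bot => False
  | Dep ps q => In r ps \/ q = r
  | And f g => occurs r f \/ occurs r g
  | Tensor f g => occurs r f \/ occurs r g
  end.

Fixpoint occurs_bad (r : letter) (f : form) : Prop :=
  match f with
  | Atom _ => False
  | NAtom p => p = r
  | Bot => False
  | Dep ps q => In r ps \/ q = r
  | And f g => occurs_bad r f \/ occurs_bad r g
  | Tensor f g => occurs_bad r f \/ occurs_bad r g
  end.

Definition is_context (phi : form) (a b : letter) : Prop :=
  a <> b /\ ~ occurs_bad a phi /\ ~ occurs_bad b phi.

Fixpoint subst2 (phi : form) (a b : letter) (psi chi : form) : form :=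
  match phi with
  | Atom r => if Nat.eqb r a then psi else if Nat.eqb r b then chi else Atom r
  | NAtom r => NAtom r
  | Bot => Bot
  | Dep ps q => Dep ps q
  | And f g => And (subst2 f a b psi chi) (subst2 g a b psi chi)
  | Tensor f g => Tensor (subst2 f a b psi chi) (subst2 g a b psi chi)
  end.

Inductive W3 : Type := w1 | w2 | w3.

Definition val_pq (p q : letter) (w : W3) (r : letter) : bool :=
  (Nat.eqb r p && match w with w1 | w2 => true | w3 => false end)
  || (Nat.eqb r q && match w with w2 | w3 => true | w1 => false end).

Definition M_pq (p q : letter) : model := Model W3 (val_pq p q).

(* Main.v *)
Require Import Defs.
From Stdlib Require Import List Arith Bool Classical.
Import ListNotations.

Definition st (b1 b2 b3 : bool) : W3 -> Prop := fun w =>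
  match w with w1 => b1 = true | w2 => b2 = true | w3 => b3 = true end.

Lemma supp_ext : forall M f (s s' : state M), (forall w, s w <-> s' w) ->
  supp M s f -> supp M s' f.
Proof.
  intros M f; induction f; simpl; intros s s' E H.
  - intros w Hw; apply H, E, Hw.
  - intros w Hw; apply H, E, Hw.
  - intros w Hw; apply (H w), E, Hw.
  - intros w w' Hw Hw'; apply H; apply E; assumption.
  - destruct H; split; [apply (IHf1 s)|apply (IHf2 s)]; assumption.
  - destruct H as [t1 [t2 [E' [H1 H2]]]]; exists t1, t2; split; [|split; assumption].
    intro w; rewrite <- E; apply E'.
Qed.

Lemma supp_empty : forall M f, supp M (fun _ => False) f.
Proof.
  intros M f; induction f; simpl; try tauto.
  exists (fun _ => False), (fun _ => False); tauto.
Qed.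

Lemma val_other : forall p q r w, r <> p -> r <> q -> val_pq p q w r = false.
Proof.
  intros p q r w H1 H2; unfold val_pq.
  rewrite (proj2 (Nat.eqb_neq r p) H1), (proj2 (Nat.eqb_neq r q) H2).
  destruct w; reflexivity.
Qed.

Lemma inv : forall p q, p <> q -> forall phi a b,
  ~ occurs_bad a phi -> ~ occurs_bad b phi -> ~ occurs p phi -> ~ occurs q phi ->
  (supp (M_pq p q) (st true true false) (subst2 phi a b (Const p) (Const q)) ->
   supp (M_pq p q) (st false true true) (subst2 phi a b (Const p) (Const q)) ->
   supp (M_pq p q) (st true false true) (subst2 phi a b (Const p) (Const q))) /\
  ((exists (s : W3 -> Prop) w, s w /\ supp (M_pq p q) s (subst2 phi a b (Const p) (Const q))) ->
   supp (M_pq p q) (st true false false) (subst2 phi a b (Const p) (Const q)) /\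
   supp (M_pq p q) (st false false true) (subst2 phi a b (Const p) (Const q))).
Proof.
  intros p q Hpq.
  assert (e1 : (p =? q) = false) by (apply Nat.eqb_neq; auto).
  assert (e2 : (q =? p) = false) by (apply Nat.eqb_neq; auto).
  induction phi; intros a b Ha Hb Hp Hq; simpl in *.
  - destruct (l =? a) eqn:Ea; [|destruct (l =? b) eqn:Eb].
    + split.
      * intros _ H. exfalso. specialize (H w2 w3 eq_refl eq_refl).
        simpl in H. unfold val_pq in H. rewrite Nat.eqb_refl, e1 in H.
        simpl in H. specialize (H (fun r (i : In r []) => match i with end)). discriminate.
      * intros _; split; intros w w' Hw Hw' _; destruct w, w'; simpl in *;
          try discriminate; reflexivity.
    + split.
      * intros H _. exfalso. specialize (H w1 w2 eq_refl eq_refl).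
        simpl in H. unfold val_pq in H. rewrite Nat.eqb_refl, e2 in H.
        simpl in H. specialize (H (fun r (i : In r []) => match i with end)). discriminate.
      * intros _; split; intros w w' Hw Hw' _; destruct w, w'; simpl in *;
          try discriminate; reflexivity.
    + split.
      * intros H _. exfalso. specialize (H w1 eq_refl). simpl in H.
        rewrite val_other in H; [discriminate| |]; intro; subst; auto.
      * intros [s [w [Hs H]]]. exfalso. specialize (H w Hs). simpl in H.
        rewrite val_other in H; [discriminate| |]; intro; subst; auto.
  - split; [intros _ _|intros _; split]; intros w _; simpl;
      apply val_other; intro; subst; auto.
  - split.
    + intros H. exfalso. apply (H w1). reflexivity.
    + intros [s [w [Hs H]]]. exfalso. apply (H w Hs).
  - split; [intros _ _|intros _; split]; intros w w' _ _ _; simpl;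
      rewrite !val_other; auto; intro; subst; auto.
  - destruct (IHphi1 a b) as [I1 K1]; try tauto.
    destruct (IHphi2 a b) as [I2 K2]; try tauto.
    split.
    + intros [A1 A2] [B1 B2]; split; auto.
    + intros [s [w [Hs [H1 H2]]]].
      destruct K1 as [K11 K13]; [exists s, w; auto|].
      destruct K2 as [K21 K23]; [exists s, w; auto|].
      split; split; auto.
  - destruct (IHphi1 a b) as [I1 K1]; try tauto.
    destruct (IHphi2 a b) as [I2 K2]; try tauto.
    split.
    + intros [t1 [t2 [Et [T1 T2]]]] [u1 [u2 [Eu [U1 U2]]]].
      destruct (classic (exists w, t2 w \/ u2 w)) as [N2|N2].
      * destruct K2 as [K21 K23].
        { destruct N2 as [w [Hw|Hw]]; [exists t2, w|exists u2, w]; auto. }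
        destruct (classic (exists w, t1 w \/ u1 w)) as [N1|N1].
        -- destruct K1 as [K11 K13].
           { destruct N1 as [w [Hw|Hw]]; [exists t1, w|exists u1, w]; auto. }
           exists (st true false false), (st false false true).
           split; [|auto]. intro w; destruct w; simpl; intuition discriminate.
        -- exists t1, (st true false true). split; [|split; auto].
           ++ intro w; split; [intro; right; auto|intros [H|H]; auto].
              exfalso; apply N1; exists w; auto.
           ++ apply I2.
              ** apply (supp_ext _ _ t2); auto. intro w; rewrite Et.
                 split; [auto|intros [H|H]; auto]. exfalso; apply N1; exists w; auto.
              ** apply (supp_ext _ _ u2); auto. intro w; rewrite Eu.
                 split; [auto|intros [H|H]; auto]. exfalso; apply N1; exists w; auto.
      * exists (st true false true), t2. split; [|split; auto].
        -- intro w; split; [intro; left; auto|intros [H|H]; auto].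
           exfalso; apply N2; exists w; auto.
        -- apply I1.
           ** apply (supp_ext _ _ t1); auto. intro w; rewrite Et.
              split; [auto|intros [H|H]; auto]. exfalso; apply N2; exists w; auto.
           ** apply (supp_ext _ _ u1); auto. intro w; rewrite Eu.
              split; [auto|intros [H|H]; auto]. exfalso; apply N2; exists w; auto.
    + intros [s [w [Hs [t1 [t2 [Et [T1 T2]]]]]]].
      destruct (proj1 (Et w) Hs) as [Hw|Hw].
      * destruct K1 as [K11 K13]; [exists t1, w; auto|].
        split; [exists (st true false false), (fun _ => False)|
                exists (st false false true), (fun _ => False)];
          (split; [intro x; simpl; tauto|split; [auto|apply supp_empty]]).
      * destruct K2 as [K21 K23]; [exists t2, w; auto|].
        split; [exists (fun _ => False), (st true false false)|
                exists (fun _ => False), (st false false true)];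
          (split; [intro x; simpl; tauto|split; [apply supp_empty|auto]]).
Qed.

Theorem theorem6 :
  forall (phi : form) (a b p q : letter),
    is_context phi a b ->
    p <> q ->
    ~ occurs p phi -> ~ occurs q phi ->
    ~ equiv_ivee_in (M_pq p q) (subst2 phi a b (Const p) (Const q)) (Const p) (Const q)
    /\ ~ equiv_ivee (subst2 phi a b (Const p) (Const q)) (Const p) (Const q).
Proof.
  intros phi a b p q [Hab [Ha Hb]] Hpq Hp Hq.
  assert (e1 : (p =? q) = false) by (apply Nat.eqb_neq; auto).
  assert (e2 : (q =? p) = false) by (apply Nat.eqb_neq; auto).
  assert (H1 : ~ equiv_ivee_in (M_pq p q) (subst2 phi a b (Const p) (Const q)) (Const p) (Const q)).
  { intro E. destruct (inv p q Hpq phi a b Ha Hb Hp Hq) as [I _].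
    assert (S12 := proj2 (E (st true true false))).
    assert (S23 := proj2 (E (st false true true))).
    assert (S13 := proj1 (E (st true false true))).
    unfold supp_ivee in *.
    destruct S13 as [H|H].
    - apply I; [apply S12; left|apply S23; right];
        intros w w' Hw Hw' _; destruct w, w'; simpl in *; try discriminate;
        unfold val_pq; rewrite ?Nat.eqb_refl, ?e1, ?e2; reflexivity.
    - specialize (H w1 w3 eq_refl eq_refl). simpl in H. unfold val_pq in H.
      rewrite Nat.eqb_refl, e1 in H. simpl in H.
      specialize (H (fun r (i : In r []) => match i with end)). discriminate.
    - specialize (H w1 w3 eq_refl eq_refl). simpl in H. unfold val_pq in H.
      rewrite Nat.eqb_refl, e2 in H. simpl in H.
      specialize (H (fun r (i : In r []) => match i with end)). discriminate. }
  split; [exact H1|]. intro E; apply H1; apply E.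
Qed.
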